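(* Let $T:\mathcal{H}(\mathbb{D})\to\mathcal{H}(\mathbb{D})$ be a linear transformation, let $X\subset\mathcal{H}(\mathbb{D})$ be a Banach space, and let $v$ be a radial weight. For $z\in\mathbb{D}$ define the linear maps $(K_z^H)_T, (K_{z,1}^{\mathcal{B}})_T: X\to\mathbb{C}$ by $(K_z^H)_T(f)=Tf(z)$ and $(K_{z,1}^{\mathcal{B}})_T(f)=(Tf)'(z)$, and let $(K_0^{\mathcal{B}})_T(f)=Tf(0)$. Then: (i) $T$ maps $X$ boundedly into $H_v$ if and only if $(K_z^H)_T\in X^*$ for every $z\in\mathbb{D}$ and $\sup_{z\in\mathbb{D}} v(z)\,\|(K_z^H)_T\|<\infty$. (ii) $T$ maps $X$ boundedly into $\mathcal{B}_v$ if and only if $(K_0^{\mathcal{B}})_T\in X^*$, $(K_{z,1}^{\mathcal{B}})_T\in X^*$ for every $z\in\mathbb{D}$, and $\sup_{z\in\mathbb{D}} v(z)\,\|(K_{z,1}^{\mathcal{B}})_T\|<\infty$.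
   Context: $\mathbb{D}$ is the open unit disk and $\mathcal{H}(\mathbb{D})$ the space of holomorphic functions on $\mathbb{D}$. A weight is a continuous function $v:\mathbb{D}\to(0,1]$; it is radial if $v(z)=v(|z|)$. $H_v=\{f\in\mathcal{H}(\mathbb{D}):\|f\|_{H_v}=\sup_{z\in\mathbb{D}}v(z)|f(z)|<\infty\}$ and $\mathcal{B}_v=\{f\in\mathcal{H}(\mathbb{D}):\sup_{z\in\mathbb{D}}v(z)|f'(z)|<\infty\}$, the latter a Banach space with norm $|f(0)|+\sup_{z}v(z)|f'(z)|$. $X^*$ denotes the (continuous) dual of $X$, and $\|\cdot\|$ of a functional is its dual norm. *)

(* Defs.v *)
From HB Require Import structures.
From mathcomp Require Import all_boot all_order all_algebra.
From mathcomp Require Import complex.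
From mathcomp Require Import all_classical all_reals all_analysis.
Import Order.TTheory GRing.Theory Num.Theory.
Import numFieldNormedType.Exports.

Set Implicit Arguments.
Unset Strict Implicit.
Unset Printing Implicit Defensive.

Local Open Scope ring_scope.
Local Open Scope complex_scope.
Local Open Scope classical_set_scope.

(* The complex plane R[i] as a normed module over itself
   (standard topology, |.| as norm). *)
Section ComplexNormed.
Variable R : rcfType.
HB.instance Definition _ := GRing.ComAlgebra.copy R[i] (R[i]^o).
HB.instance Definition _ := Vector.copy R[i] (R[i]^o).
HB.instance Definition _ := NormedModule.copy R[i] (R[i]^o).
End ComplexNormed.

Section Defs.
Variable R : realType.
Local Notation C := R[i].

Definition inD (z : C) : Prop := `|z| < 1.

(* f is holomorphic on D: complex differentiable at every point of D.
   Elements of H(D) are represented by functions C -> C whose values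
   outside D are irrelevant. *)
Definition holoD (f : C -> C) : Prop := forall z, inD z -> derivable f z 1.

(* T : H(D) -> H(D) is a linear transformation (on the representatives:
   it preserves holomorphy, only depends on values on D, and is linear
   modulo equality on D). *)
Definition linear_on_HD (T : (C -> C) -> (C -> C)) : Prop :=
  [/\ (forall f, holoD f -> holoD (T f)),
      (forall f g, holoD f -> holoD g -> (forall z, inD z -> f z = g z) ->
         forall z, inD z -> T f z = T g z) &
      (forall (a : C) f g, holoD f -> holoD g ->
         forall z, inD z -> T (fun w => a * f w + g w) z = a * T f z + T g z)].

Definition weight (v : C -> R) : Prop :=
  (forall z, inD z -> {for z, continuous v}) /\
  (forall z, inD z -> 0 < v z <= 1).

Definition radial (v : C -> R) : Prop :=
  forall z w, inD z -> inD w -> `|z| = `|w| -> v z = v w.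

(* the Banach space X, a linear subspace of H(D) with its own complete norm:
   given as a complete normed C-module V together with a linear injection
   iota : V -> H(D) (injective modulo equality on D). *)
Definition subspace_of_HD (V : normedModType C) (iota : V -> (C -> C)) : Prop :=
  [/\ (forall x, holoD (iota x)),
      (forall (a : C) x y z, inD z -> iota (a *: x + y) z = a * iota x z + iota y z) &
      (forall x y, (forall z, inD z -> iota x z = iota y z) -> x = y)].

Definition rnorm (V : normedModType C) (x : V) : R := complex.Re `|x|.

Definition in_Hv (v : C -> R) (f : C -> C) : Prop :=
  holoD f /\ exists M : R, forall z, inD z -> v z * rnorm (f z) <= M.

Definition Hv_norm (v : C -> R) (f : C -> C) : R :=
  sup [set v z * rnorm (f z) | z in inD].

Definition in_Bv (v : C -> R) (f : C -> C) : Prop :=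
  holoD f /\ exists M : R, forall z, inD z -> v z * rnorm (derive1 f z) <= M.

Definition Bv_norm (v : C -> R) (f : C -> C) : R :=
  rnorm (f 0) + sup [set v z * rnorm (derive1 f z) | z in inD].

Definition in_dual (V : normedModType C) (phi : V -> C) : Prop :=
  (forall (a : C) x y, phi (a *: x + y) = a * phi x + phi y) /\ continuous phi.

Definition dual_norm (V : normedModType C) (phi : V -> C) : R :=
  sup [set rnorm (phi x) | x in [set x : V | rnorm x <= 1]].

Definition bounded_into_Hv (V : normedModType C) (iota : V -> (C -> C))
    (T : (C -> C) -> (C -> C)) (v : C -> R) : Prop :=
  (forall x, in_Hv v (T (iota x))) /\
  exists M : R, forall x, Hv_norm v (T (iota x)) <= M * rnorm x.

Definition bounded_into_Bv (V : normedModType C) (iota : V -> (C -> C))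
    (T : (C -> C) -> (C -> C)) (v : C -> R) : Prop :=
  (forall x, in_Bv v (T (iota x))) /\
  exists M : R, forall x, Bv_norm v (T (iota x)) <= M * rnorm x.

Definition KH (V : normedModType C) (iota : V -> (C -> C))
    (T : (C -> C) -> (C -> C)) (z : C) : V -> C :=
  fun x => T (iota x) z.

Definition KB0 (V : normedModType C) (iota : V -> (C -> C))
    (T : (C -> C) -> (C -> C)) : V -> C :=
  fun x => T (iota x) 0.

Definition KB1 (V : normedModType C) (iota : V -> (C -> C))
    (T : (C -> C) -> (C -> C)) (z : C) : V -> C :=
  fun x => derive1 (T (iota x)) z.

End Defs.

(* Main.v *)
Require Import Defs.
From HB Require Import structures.
From mathcomp Require Import all_boot all_order all_algebra.
From mathcomp Require Import complex.
From mathcomp Require Import all_classical all_reals all_analysis.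
From mathcomp Require Import ring lra.
Import Order.TTheory GRing.Theory Num.Theory.
Import numFieldNormedType.Exports.
Local Open Scope ring_scope.
Local Open Scope complex_scope.
Local Open Scope classical_set_scope.

Section H.
Context {R : realType}.
Local Notation C := R[i].

Lemma ge0_RRe (c : C) : 0 <= c -> c = (complex.Re c)%:C.
Proof. by move=> h; apply/esym/RRe_real; exact: ger0_real. Qed.

Lemma le_Re (c d : C) : 0 <= c -> 0 <= d -> (complex.Re c <= complex.Re d) = (c <= d).
Proof. by move=> /ge0_RRe -> /ge0_RRe ->; rewrite lecR. Qed.

Lemma lt_Re (c d : C) : 0 <= c -> 0 <= d -> (complex.Re c < complex.Re d) = (c < d).
Proof. by move=> /ge0_RRe -> /ge0_RRe ->; rewrite ltcR. Qed.

Lemma normE {V : normedModType C} (x : V) : `|x| = (rnorm x)%:C.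
Proof. exact/ge0_RRe. Qed.

Lemma rnorm_ge0 {V : normedModType C} (x : V) : 0 <= rnorm x.
Proof. by rewrite -ler0c -normE. Qed.

Lemma rnormZ {V : normedModType C} (a : C) (x : V) : rnorm (a *: x) = rnorm a * rnorm x.
Proof. by rewrite /rnorm normrZ (normE a) (normE x) -rmorphM. Qed.

Lemma rnormD {V : normedModType C} (x y : V) : rnorm (x + y) <= rnorm x + rnorm y.
Proof. by have := ler_normD x y; rewrite !normE -rmorphD lecR. Qed.

Lemma rnorm0 {V : normedModType C} : rnorm (0 : V) = 0.
Proof. by rewrite /rnorm normr0. Qed.

Lemma rnorm_eq0 {V : normedModType C} (x : V) : (rnorm x == 0) = (x == 0).
Proof. by rewrite -[RHS]normr_eq0 normE eq_complex /= eqxx andbT. Qed.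

Lemma rnormR (k : R) : 0 <= k -> rnorm (k%:C : C) = k.
Proof. by move=> k0; rewrite /rnorm ger0_norm // ler0c. Qed.

Lemma rnormM (a b : C) : rnorm (a * b) = rnorm a * rnorm b.
Proof. by rewrite /rnorm normrM (normE a) (normE b) -rmorphM. Qed.


Section Dual.
Context {V : normedModType C}.
Implicit Types (phi : V -> C).

Definition lin phi := forall (a : C) x y, phi (a *: x + y) = a * phi x + phi y.

Lemma lin0 phi : lin phi -> phi 0 = 0.
Proof. by move=> hl; have := hl (-1) 0 0; rewrite scaler0 addr0 mulN1r addNr. Qed.

Lemma linZ phi a x : lin phi -> phi (a *: x) = a * phi x.
Proof. by move=> hl; have := hl a x 0; rewrite addr0 lin0 // addr0. Qed.

Lemma linB phi x y : lin phi -> phi (x - y) = phi x - phi y.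
Proof.
move=> hl; have := hl 1 x (-y); rewrite scale1r mul1r => ->.
by rewrite -scaleN1r (linZ _ _ _ hl) mulN1r.
Qed.

Lemma lip_dual phi (K : R) : 0 <= K -> lin phi ->
  (forall x, rnorm (phi x) <= K * rnorm x) -> in_dual phi /\ dual_norm phi <= K.
Proof.
move=> K0 hl hK; split; first split => //.
  move=> x; apply/cvgrPdist_lt => e e0.
  have K1 : 0 < K%:C + 1 by apply: ltr_wpDl; [rewrite ler0c | exact: ltr01].
  apply/nbhs_normP; exists (e / (K%:C + 1)); first exact: divr_gt0.
  move=> t /= ht; rewrite -(linB _ _ _ hl) normE.
  have h1 : (rnorm (phi (x - t)))%:C <= K%:C * `|x - t|.
    by rewrite normE -rmorphM lecR.
  apply: (le_lt_trans h1); apply: (@le_lt_trans _ _ ((K%:C + 1) * `|x - t|)).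
    by apply: ler_wpM2r => //; rewrite lerDl ler01.
  have hE : (K%:C + 1) * (e / (K%:C + 1)) = e by rewrite mulrC divfK // gt_eqF.
  by rewrite -(ltr_pM2l K1) hE in ht.
apply: ge_sup.
  by exists (rnorm (phi 0)); exists 0 => //=; rewrite rnorm0 ler01.
move=> _ [x hx <-]; have := hK x; have := rnorm_ge0 x; rewrite /= in hx; nra.
Qed.

Lemma dual_bound phi : in_dual phi ->
  exists K : R, 0 <= K /\ forall x, rnorm (phi x) <= K * rnorm x.
Proof.
move=> [hl hc]; have := hc 0; move/cvgrPdist_lt => /(_ 1 ltr01).
rewrite (lin0 _ hl); move/nbhs_normP => [e e0 he].
have ee := @ge0_RRe e (ltW e0); set d := complex.Re e in ee.
have d0 : 0 < d by rewrite -ltcR -ee.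
exists (2 / d); split; first by rewrite divr_ge0 // ltW.
move=> x; have [->|xn0] := eqVneq x 0; first by rewrite (lin0 _ hl) !rnorm0 mulr0.
have r0 : 0 < rnorm x by rewrite lt0r rnorm_eq0 xn0 rnorm_ge0.
set r := rnorm x in r0 *.
set s := (d / 2) / r.
have s0 : 0 < s by apply: divr_gt0 => //; apply: divr_gt0.
have hy : `|0 - s%:C *: x| < e.
  rewrite sub0r normrN normE rnormZ rnormR ?(ltW s0) // ee ltcR.
  rewrite /s divfK ?gt_eqF //; lra.
have := he _ hy; rewrite /= sub0r normrN (linZ _ _ _ hl) normE rnormM rnormR ?(ltW s0) //.
rewrite -(rmorph1 (real_complex R)) ltcR => h.
have hKrs : 2 / d * r * s = 1 by rewrite /s; field; rewrite ?gt_eqF.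
have := rnorm_ge0 (phi x); have : 0 <= 2 / d * r by apply: mulr_ge0; [apply: divr_ge0; [|apply: ltW]|apply: ltW].
nra.
Qed.

Lemma dual_norm_bound phi : in_dual phi ->
  forall x, rnorm (phi x) <= dual_norm phi * rnorm x.
Proof.
move=> hd; have [K [K0 hK]] := dual_bound _ hd; have hl := hd.1.
move=> x; have [->|xn0] := eqVneq x 0; first by rewrite (lin0 _ hl) !rnorm0 mulr0.
have r0 : 0 < rnorm x by rewrite lt0r rnorm_eq0 xn0 rnorm_ge0.
set r := rnorm x in r0 *.
have hy : rnorm ((r^-1)%:C *: x) <= 1.
  by rewrite rnormZ rnormR ?invr_ge0 ?(ltW r0) // mulVf ?gt_eqF.
have : rnorm (phi ((r^-1)%:C *: x)) <= dual_norm phi.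
  apply: ub_le_sup; last by exists ((r^-1)%:C *: x).
  exists K => _ [y hy' <-]; have := hK y; have := rnorm_ge0 y; rewrite /= in hy'; nra.
rewrite (linZ _ _ _ hl) rnormM rnormR ?invr_ge0 ?(ltW r0) // => h.
have -> : rnorm (phi x) = r * (r^-1 * rnorm (phi x)) by rewrite mulrA mulfV ?gt_eqF ?mul1r.
by rewrite mulrC ler_wpM2r // ltW.
Qed.

End Dual.

Lemma inD0 : inD (0 : C).
Proof. by rewrite /inD normr0 ltr01. Qed.

Lemma near_inD (z : C) : inD z -> \forall w \near z, inD w.
Proof.
move=> hz; apply/nbhs_normP; exists (1 - `|z|); first by rewrite /= subr_gt0.
move=> w /= hw; rewrite /inD.
have := ler_distD z w 0; rewrite !subr0 (distrC w z) => h.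
by apply: (le_lt_trans h); rewrite -ltrBrDr.
Qed.

Lemma holo_comb (f g : C -> C) (a : C) : holoD f -> holoD g -> holoD (fun w => a * f w + g w).
Proof.
move=> hf hg z hz.
have -> : (fun w => a * f w + g w) = (a \*: f) + g by [].
by apply: derivableD; [apply: derivableZ; exact: hf | exact: hg].
Qed.

Lemma sup_ptD (g : C -> R) z : inD z -> (exists M, forall z, inD z -> g z <= M) ->
  g z <= sup [set g z | z in @inD R].
Proof.
move=> hz [M hM]; apply: ub_le_sup; last by exists z.
by exists M => _ [w hw <-]; exact: hM.
Qed.

Lemma sup_leD (g : C -> R) B : (forall z, inD z -> g z <= B) ->
  sup [set g z | z in @inD R] <= B.
Proof.
move=> h; apply: ge_sup; first by exists (g 0); exists 0 => //; exact: inD0.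
by move=> _ [w hw <-]; exact: h.
Qed.

Section TT.
Context {T : (C -> C) -> (C -> C)} {V : normedModType C} {iota : V -> (C -> C)}.
Variable hT : linear_on_HD T.
Variable hi : subspace_of_HD iota.

Lemma Tlin a x y z : inD z ->
  T (iota (a *: x + y)) z = a * T (iota x) z + T (iota y) z.
Proof.
case: hT => hT1 hT2 hT3; case: hi => hi1 hi2 hi3 hz.
rewrite (hT2 _ (fun w => a * iota x w + iota y w)) //; first exact: hT3.
- exact: holo_comb.
- by move=> w hw; exact: hi2.
Qed.

Lemma KB1lin a x y z : inD z ->
  derive1 (T (iota (a *: x + y))) z =
  a * derive1 (T (iota x)) z + derive1 (T (iota y)) z.
Proof.
move=> hz; rewrite !derive1E.
rewrite (@near_eq_derive _ _ _ _ (fun w => a * T (iota x) w + T (iota y) w)); last first.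
  near=> w; apply: Tlin; near: w; exact: near_inD.
have -> : (fun w => a * T (iota x) w + T (iota y) w) = (a \*: T (iota x)) + T (iota y) by [].
have hol u : derivable (T (iota u)) z 1.
  by case: hT => h _ _; apply: h => //; case: hi.
by rewrite deriveD ?deriveZ //; apply: derivableZ.
Unshelve. all: by end_near.
Qed.

End TT.
End H.

Theorem theorem2p1 (R : realType) (T : (R[i] -> R[i]) -> (R[i] -> R[i]))
    (V : completeNormedModType R[i]) (iota : V -> (R[i] -> R[i]))
    (v : R[i] -> R) :
  linear_on_HD T -> subspace_of_HD iota -> weight v -> radial v ->
  (bounded_into_Hv iota T v <->
     (forall z, inD z -> in_dual (KH iota T z)) /\
     exists M : R, forall z, inD z -> v z * dual_norm (KH iota T z) <= M)
  /\
  (bounded_into_Bv iota T v <->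
     [/\ in_dual (KB0 iota T),
         (forall z, inD z -> in_dual (KB1 iota T z)) &
         exists M : R, forall z, inD z -> v z * dual_norm (KB1 iota T z) <= M]).
Proof.
move=> hT hi hw _.
have [hT1 hT2 hT3] := hT; have [hi1 hi2 hi3] := hi.
have hol x : holoD (T (iota x)) := hT1 _ (hi1 x).
have vpos z : inD z -> 0 < v z by move=> hz; have /andP[] := hw.2 z hz.
split; split.
- move=> [hin [M hM]]; set M' := Num.max M 0.
  have MM : M <= M' by rewrite /M' le_max lexx.
  have M0 : 0 <= M' by rewrite /M' le_max lexx orbT.
  have hb z : inD z -> forall x, rnorm (KH iota T z x) <= (M' / v z) * rnorm x.
    move=> hz x; rewrite /KH.
    have h1 : v z * rnorm (T (iota x) z) <= Hv_norm v (T (iota x)).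
      by apply: (sup_ptD (fun z => v z * rnorm (T (iota x) z))) => //; exact: (hin x).2.
    have h2 := hM x; have := rnorm_ge0 x; have := vpos z hz.
    rewrite mulrAC (ler_pdivlMr _ _ (vpos z hz)); nra.
  have hd z : inD z -> in_dual (KH iota T z) /\ dual_norm (KH iota T z) <= M' / v z.
    move=> hz; apply: (lip_dual (KH iota T z) (M' / v z)); last exact: hb.
      by apply: divr_ge0 => //; exact: ltW (vpos z hz).
    by move=> a x y; rewrite /KH; exact: (Tlin hT hi a x y z hz).
  split; first by move=> z hz; exact: (hd z hz).1.
  exists M' => z hz; have [_ h] := hd z hz.
  by rewrite mulrC -(ler_pdivlMr _ _ (vpos z hz)).
- move=> [hd [M hM]].
  have hb x z : inD z -> v z * rnorm (T (iota x) z) <= M * rnorm x.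
    move=> hz; have := dual_norm_bound _ (hd z hz) x; rewrite /KH => h.
    have := hM z hz; have := rnorm_ge0 x; have := vpos z hz; have := rnorm_ge0 (T (iota x) z).
    nra.
  split; first by move=> x; split; [exact: hol | exists (M * rnorm x) => z hz; exact: hb].
  by exists M => x; apply: sup_leD => z hz; exact: hb.
- move=> [hin [M hM]]; set M' := Num.max M 0.
  have MM : M <= M' by rewrite /M' le_max lexx.
  have M0 : 0 <= M' by rewrite /M' le_max lexx orbT.
  have hS x : 0 <= sup [set v z * rnorm (derive1 (T (iota x)) z) | z in @inD R].
    have h := sup_ptD (fun z => v z * rnorm (derive1 (T (iota x)) z)) 0 inD0 (hin x).2.
    have := vpos _ inD0; have := rnorm_ge0 (derive1 (T (iota x)) 0); move: h => /=; nra.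
  have hB x : Bv_norm v (T (iota x)) <= M' * rnorm x.
    by have := hM x; have := rnorm_ge0 x; nra.
  have hb z : inD z -> forall x, rnorm (KB1 iota T z x) <= (M' / v z) * rnorm x.
    move=> hz x; rewrite /KB1.
    have h1 : v z * rnorm (derive1 (T (iota x)) z) <= Bv_norm v (T (iota x)).
      have := sup_ptD (fun z => v z * rnorm (derive1 (T (iota x)) z)) z hz (hin x).2.
      have := rnorm_ge0 (T (iota x) 0); rewrite /Bv_norm; lra.
    have h2 := hB x; have := rnorm_ge0 x; have := vpos z hz.
    rewrite mulrAC (ler_pdivlMr _ _ (vpos z hz)); nra.
  have hd z : inD z -> in_dual (KB1 iota T z) /\ dual_norm (KB1 iota T z) <= M' / v z.
    move=> hz; apply: (lip_dual (KB1 iota T z) (M' / v z)); last exact: hb.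
      by apply: divr_ge0 => //; exact: ltW (vpos z hz).
    by move=> a x y; rewrite /KB1; exact: (KB1lin hT hi a x y z hz).
  split.
  + apply: (fun hl hK => (lip_dual (KB0 iota T) M' M0 hl hK).1).
      by move=> a x y; rewrite /KB0; exact: (Tlin hT hi a x y 0 inD0).
    move=> x; rewrite /KB0; have := hB x; have := hS x; rewrite /Bv_norm; lra.
  + by move=> z hz; exact: (hd z hz).1.
  + exists M' => z hz; have [_ h] := hd z hz.
    by rewrite mulrC -(ler_pdivlMr _ _ (vpos z hz)).
- move=> [h0 h1 [M hM]].
  have hb x z : inD z -> v z * rnorm (derive1 (T (iota x)) z) <= M * rnorm x.
    move=> hz; have := dual_norm_bound _ (h1 z hz) x; rewrite /KB1 => h.
    have := hM z hz; have := rnorm_ge0 x; have := vpos z hz;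
    have := rnorm_ge0 (derive1 (T (iota x)) z).
    nra.
  split; first by move=> x; split; [exact: hol | exists (M * rnorm x) => z hz; exact: hb].
  exists (dual_norm (KB0 iota T) + M) => x; rewrite /Bv_norm.
  have := dual_norm_bound _ h0 x; rewrite /KB0 => ha.
  have := sup_leD (fun z => v z * rnorm (derive1 (T (iota x)) z)) _ (hb x).
  rewrite mulrDl; lra.
Qed.
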